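(* For any positive integers $q$ and $k$ there exists a constant $f(q,k)$ such that the following holds. Let $D=(V,A)$ be a Steiner rooted $k$-arc-connected directed graph with root $r$ and a single terminal $s$, and let $\mathcal{C}$ be a family of pairwise vertex-disjoint $s$-essential directed cycles in $D$ with $|\mathcal{C}|\ge f(q,k)$. Then there exist $C_1,\ldots,C_q\in\mathcal{C}$ such that $(C_1,\ldots,C_q)$ is an $s$-ordered sequence of directed cycles.
   Context: Let $D=(V,A)$ be a directed graph with root $r\in V$ and terminal set $S\subseteq V\setminus\{r\}$; it is Steiner rooted $k$-arc-connected if for every $s\in S$ there are $k$ pairwise arc-disjoint directed $r$-$s$ paths. For $s\in S$, a set $U\subseteq V$ is an $s$-cut if $r\in U$ and $s\notin U$; it is a tight $s$-cut if moreover the number of arcs leaving $U$ equals $k$. A set $U$ properly intersects a directed cycle $C$ if $V(C)\cap U\neq\emptyset$ and $V(C)\setminus U\neq\emptyset$. A directed cycle $C$ is $s$-essential if some tight $s$-cut properly intersects $C$. A sequence of directed cycles $(C_1,\ldots,C_q)$ is $s$-ordered if there exist tight $s$-cuts $U_1,\ldots,U_q$ such that $V(C_i)\subseteq U_j$ for all $i<j$, $V(C_i)\cap U_j=\emptyset$ for all $i>j$, and $U_i$ properly intersects $C_i$ for every $i$. *)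

(* Defs.v *)
(* A directed (multi)graph D = (V, A) is given by finite types
   V (vertices) and A (arcs) together with tail and head maps tl hd : A -> V. *)
From mathcomp Require Import all_boot.
Set Implicit Arguments. Unset Strict Implicit. Unset Printing Implicit Defensive.

Section Digraph.
Variables (V A : finType) (tl hd : A -> V).

Fixpoint is_walk (x : V) (p : seq A) (y : V) : bool :=
  match p with
  | [::] => x == y
  | a :: p' => (tl a == x) && is_walk (hd a) p' y
  end.

Definition dipath (x y : V) (p : seq A) : bool :=
  is_walk x p y && uniq (x :: map hd p).

Definition steiner_rooted_kac (r : V) (S : {set V}) (k : nat) : Prop :=
  r \notin S /\
  forall s, s \in S ->
    exists P : 'I_k -> seq A,
      (forall i, dipath r s (P i)) /\
      (forall i j, i != j -> forall a, a \in P i -> a \notin P j).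

Definition delta_out (U : {set V}) : {set A} :=
  [set a | (tl a \in U) && (hd a \notin U)].

Definition s_cut (r s : V) (U : {set V}) : bool := (r \in U) && (s \notin U).

Definition tight_s_cut (k : nat) (r s : V) (U : {set V}) : bool :=
  s_cut r s U && (#|delta_out U| == k).

Definition dicycle (C : seq A) : bool :=
  match C with
  | [::] => false
  | a :: _ => is_walk (tl a) C (tl a) && uniq (map tl C)
  end.

Definition cyc_verts (C : seq A) : {set V} := [set x | x \in map tl C].

Definition properly_intersects (U : {set V}) (C : seq A) : bool :=
  (U :&: cyc_verts C != set0) && (cyc_verts C :\: U != set0).

Definition s_essential (k : nat) (r s : V) (C : seq A) : Prop :=
  dicycle C /\ exists U : {set V}, tight_s_cut k r s U && properly_intersects U C.

Definition s_ordered (k : nat) (r s : V) (q : nat) (Cs : 'I_q -> seq A) : Prop :=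
  (forall i, dicycle (Cs i)) /\
  exists Us : 'I_q -> {set V},
    (forall j, tight_s_cut k r s (Us j)) /\
    (forall i j : 'I_q, i < j -> cyc_verts (Cs i) \subset Us j) /\
    (forall i j : 'I_q, j < i -> cyc_verts (Cs i) :&: Us j = set0) /\
    (forall i, properly_intersects (Us i) (Cs i)).

End Digraph.

(* Main.v *)
Require Import Defs.
From mathcomp Require Import all_boot.
From mathcomp Require Import zify.
Set Implicit Arguments. Unset Strict Implicit. Unset Printing Implicit Defensive.

Lemma mem_cons_r (T : eqType) {a b : T} {s} : b \in s -> b \in a :: s.
Proof. by rewrite inE => ->; rewrite orbT. Qed.

Section Proof1.
Variables (V A : finType) (tl hd : A -> V).

Lemma walk_exit (U : {set V}) x p y :
  is_walk tl hd x p y -> x \in U -> y \notin U ->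
  exists2 a, a \in p & a \in delta_out tl hd U.
Proof.
elim: p x => [|a p IH] x /=; first by move=> /eqP -> ->.
move=> /andP [/eqP tla w] xU yU.
case hU: (hd a \in U).
  have [b bp bd] := IH _ w hU yU.
  by exists b => //; rewrite inE bp orbT.
by exists a; rewrite ?inE ?eqxx // tla xU hU.
Qed.

Lemma walk_closed (U : {set V}) x p y :
  is_walk tl hd x p y -> (forall a, a \in p -> tl a \in U -> hd a \in U) ->
  x \in U -> (forall a, a \in p -> tl a \in U) /\ y \in U.
Proof.
elim: p x => [|a p IH] x /=; first by move=> /eqP -> _ ->.
move=> /andP [/eqP tla w] cl xU.
have haU : hd a \in U by apply: cl; rewrite ?inE ?eqxx // tla.
have [H1 H2] := IH _ w (fun b bp => cl b (mem_cons_r bp)) haU.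
split=> // b; rewrite inE => /orP [/eqP -> | bp]; [by rewrite tla | exact: H1].
Qed.

Lemma walk_reach (U : {set V}) x p y :
  is_walk tl hd x p y -> (forall a, a \in p -> tl a \in U -> hd a \in U) ->
  forall b, b \in p -> tl b \in U -> y \in U.
Proof.
elim: p x => [|a p IH] x //= /andP [/eqP tla w] cl b.
rewrite inE => /orP [/eqP -> | bp] tbU.
  have haU : hd a \in U by apply: cl; rewrite ?inE ?eqxx.
  by case: (walk_closed w (fun c cp => cl c (mem_cons_r cp)) haU).
exact: (IH _ w (fun c cp => cl c (mem_cons_r cp)) b bp tbU).
Qed.

Lemma cycle_exit (U : {set V}) C :
  dicycle tl hd C -> properly_intersects tl U C ->
  exists2 a, a \in C & a \in delta_out tl hd U.
Proof.
case: C => [|a0 C] //; rewrite /dicycle => /andP [w _] /andP [].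
move=> /set0Pn [x]; rewrite !in_set => /andP [xU /mapP [b bC exb]]; rewrite exb in xU.
move=> /set0Pn [y]; rewrite !in_set => /andP [yU /mapP [c cC eyc]].
have [/existsP [a /andP [aC aD]]|/existsPn H] :=
  boolP [exists a, (a \in a0 :: C) && (a \in delta_out tl hd U)].
  by exists a.
have cl : forall a, a \in a0 :: C -> tl a \in U -> hd a \in U.
  move=> a aC taU; move: (H a); rewrite aC inE taU /=; by case: (hd a \in U).
have w' : is_walk tl hd (tl a0) (a0 :: C) (tl a0) := w.
have r0 := walk_reach w' cl bC xU.
have [all _] := walk_closed w' cl r0.
by move: yU; rewrite eyc all.
Qed.
End Proof1.
Section Proof2.
Variables (V A : finType) (tl hd : A -> V) (r s : V) (k : nat).
Hypothesis kac : steiner_rooted_kac tl hd r [set s] k.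

Local Notation dout := (delta_out tl hd).
Local Notation tight := (tight_s_cut tl hd k r s).
Local Notation cv := (cyc_verts tl).

Lemma cut_lb U : s_cut r s U -> k <= #|dout U|.
Proof.
move=> /andP [rU sU].
have [_ /(_ s (set11 s)) [P [Pp Pd]]] := kac.
have ex i : exists2 a, a \in P i & a \in dout U.
  by have /andP [w _] := Pp i; apply: walk_exit w rU sU.
have [->//|kpos] := posnP k.
have [a1 _ _] := ex (Ordinal kpos).
pose g i := odflt a1 [pick a in P i | a \in dout U].
have gP i : (g i \in P i) && (g i \in dout U).
  rewrite /g; case: pickP => [a /andP [-> ->] //|H].
  by have [a aP aD] := ex i; move: (H a); rewrite aP aD.
have ginj : injective g.
  move=> i j eij; apply/eqP; apply/negPn/negP => nij.
  have /andP [gi _] := gP i; have /andP [gj _] := gP j.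
  by move: (Pd i j nij _ gi); rewrite eij gj.
rewrite -{1}(card_ord k) -cardsT -(card_imset _ ginj).
apply: subset_leq_card; apply/subsetP => a /imsetP [i _ ->].
by have /andP [_ ->] := gP i.
Qed.

Lemma submod X Y :
  #|dout (X :|: Y)| + #|dout (X :&: Y)| <= #|dout X| + #|dout Y|.
Proof.
rewrite -cardsUI -[#|dout X| + _]cardsUI.
apply: leq_add; apply: subset_leq_card; apply/subsetP => a; rewrite !inE;
by case: (tl a \in X); case: (tl a \in Y); case: (hd a \in X); case: (hd a \in Y).
Qed.

Lemma tightUI X Y : tight X -> tight Y -> tight (X :|: Y) && tight (X :&: Y).
Proof.
rewrite /tight_s_cut /s_cut => /andP [/andP [rX sX] /eqP cX] /andP [/andP [rY sY] /eqP cY].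
have cU : s_cut r s (X :|: Y) by rewrite /s_cut !inE rX negb_or sX sY.
have cI : s_cut r s (X :&: Y) by rewrite /s_cut !inE rX rY negb_and sX.
have l1 := cut_lb cU; have l2 := cut_lb cI; have sm := submod X Y.
move: cU cI; rewrite /s_cut => -> ->; rewrite cX cY in sm.
rewrite /=; apply/andP; split; rewrite eqn_leq.
  by rewrite l1 andbT -(leq_add2r #|dout (X :&: Y)|) (leq_trans sm) // leq_add2l.
by rewrite l2 andbT -(leq_add2l #|dout (X :|: Y)|) (leq_trans sm) // leq_add2r.
Qed.
End Proof2.
Section Proof3.
Variables (V A : finType) (tl hd : A -> V) (r s : V) (k : nat).
Hypothesis kac : steiner_rooted_kac tl hd r [set s] k.

Local Notation dout := (delta_out tl hd).
Local Notation tight := (tight_s_cut tl hd k r s).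
Local Notation cv := (cyc_verts tl).

Definition pdisj (L : seq (seq A)) := forall C C', C \in L -> C' \in L -> C != C' ->
  [disjoint cv C & cv C'].

Lemma split_bound W L : tight W -> uniq L -> pdisj L ->
  (forall C, C \in L -> dicycle tl hd C && properly_intersects tl W C) -> size L <= k.
Proof.
move=> /andP [_ /eqP cW] uL dL hL.
case: L uL dL hL => [//|C0 L0] uL dL hL.
have /andP [d0 p0] := hL C0 (mem_head _ _).
have [a1 _ _] := cycle_exit d0 p0.
set L := C0 :: L0 in uL dL hL *.
pose g (C : seq A) := odflt a1 [pick a in C | a \in dout W].
have gP C : C \in L -> (g C \in C) && (g C \in dout W).
  move=> CL; rewrite /g; case: pickP => [a /andP [-> ->] //|H].
  have /andP [d p] := hL C CL.
  by have [a aP aD] := cycle_exit d p; move: (H a); rewrite aP aD.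
have ginj : {in L &, injective g}.
  move=> C C' CL C'L e; apply/eqP; apply/negPn/negP => nC.
  have := disjoint_setI0 (dL C C' CL C'L nC).
  have /andP [gC _] := gP C CL; have /andP [gC' _] := gP C' C'L.
  move/setP/(_ (tl (g C))); rewrite !inE.
  by rewrite (map_f tl gC) e (map_f tl gC').
rewrite -(size_map g) -cW.
have u : uniq (map g L) by rewrite map_inj_in_uniq.
rewrite -(card_uniqP u); apply: subset_leq_card; apply/subsetP => a /mapP [C CL ->].
by have /andP [_ ->] := gP C CL.
Qed.

Lemma ex_maxcard (P : pred {set V}) U0 : P U0 ->
  exists U, P U /\ forall W, P W -> #|W| <= #|U|.
Proof. by move=> H; case: (arg_maxnP (fun U : {set V} => #|U|) H) => U PU mx; exists U. Qed.

Lemma ex_mincard (P : pred {set V}) U0 : P U0 ->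
  exists U, P U /\ forall W, P W -> #|U| <= #|W|.
Proof. by move=> H; case: (arg_minnP (fun U : {set V} => #|U|) H) => U PU mx; exists U. Qed.

End Proof3.
Section Proof4.
Variables (V A : finType) (tl hd : A -> V) (r s : V) (k : nat).
Hypothesis kac : steiner_rooted_kac tl hd r [set s] k.

Local Notation dout := (delta_out tl hd).
Local Notation tight := (tight_s_cut tl hd k r s).
Local Notation cv := (cyc_verts tl).
Local Notation ess := (s_essential tl hd k r s).

Lemma tightU X Y : tight X -> tight Y -> tight (X :|: Y).
Proof. by move=> tX tY; case/andP: (tightUI kac tX tY). Qed.
Lemma tightI X Y : tight X -> tight Y -> tight (X :&: Y).
Proof. by move=> tX tY; case/andP: (tightUI kac tX tY). Qed.

Lemma pdisj_filter (p : pred (seq A)) L : pdisj tl L -> pdisj tl (filter p L).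
Proof. by move=> dL C C'; rewrite !mem_filter => /andP [_ ?] /andP [_ ?]; apply: dL. Qed.

Lemma meet_nonempty (U : {set V}) C : (U :&: cv C != set0) = ~~ [disjoint cv C & U].
Proof. by rewrite setI_eq0 disjoint_sym. Qed.

Lemma step1 F : pdisj tl F -> uniq F -> (forall C, C \in F -> ess C) -> k < size F ->
  exists U, tight U && has (fun C => cv C \subset U) F.
Proof.
move=> dF uF eF szF.
case: F dF uF eF szF => [//|C0 F0] dF uF eF szF.
set F := C0 :: F0 in dF uF eF szF *.
have [_ [U0 /andP [tU0 _]]] := eF C0 (mem_head _ _).
have [M [tM Mmax]] := ex_maxcard (P := tight) tU0.
have Msub U : tight U -> U \subset M.
  move=> tU; apply/negPn/negP => nsub.
  have := Mmax _ (tightU tM tU).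
  by rewrite leqNgt (proper_card (properUl nsub)).
exists M; rewrite tM andTb; apply/idPn => nh0.
have nh : forall C, C \in F -> ~~ (cv C \subset M).
  by move=> C CF; apply: contra nh0 => sub; apply/hasP; exists C.
suff: size F <= k by rewrite leqNgt szF.
apply: (split_bound tM uF dF) => C CF.
have [dC [U /andP [tU /andP [pU1 pU2]]]] := eF C CF.
have nC := nh C CF.
rewrite dC /= /properly_intersects setD_eq0 nC andbT.
apply: contra pU1 => /eqP H; apply/eqP/setP => x.
rewrite in_set0; apply/negP; rewrite in_setI => /andP [xU xC].
have : x \in M :&: cv C by rewrite in_setI xC (subsetP (Msub U tU)).
by rewrite H in_set0.
Qed.

End Proof4.
Section Proof5.
Variables (V A : finType) (tl hd : A -> V) (r s : V) (k : nat).
Hypothesis kac : steiner_rooted_kac tl hd r [set s] k.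

Local Notation dout := (delta_out tl hd).
Local Notation tight := (tight_s_cut tl hd k r s).
Local Notation cv := (cyc_verts tl).
Local Notation ess := (s_essential tl hd k r s).

Lemma step2 F : (forall C, C \in F -> ess C) ->
  (exists U, tight U && has (fun C => cv C \subset U) F) ->
  exists X Y C1, [/\ tight X, tight Y, (C1 \in F) && (cv C1 \subset X), Y \subset X &
   forall C, C \in F -> cv C \subset X -> properly_intersects tl Y C].
Proof.
move=> eF [U0 HU0].
have [X [/andP [tX /hasP [C1 C1F C1X]] Xmin]] := ex_mincard (P := fun U => tight U && has (fun C => cv C \subset U) F) HU0.
have [_ [U1 /andP [tU1 /andP [p11 p12]]]] := eF C1 C1F.
set Z1 := U1 :&: X.
have PZ1 : tight Z1 && (Z1 \subset X) && (#|Z1| < #|X|).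
  rewrite (tightI kac tU1 tX) subsetIr /=; apply: proper_card.
  rewrite properEneq subsetIr andbT; apply/negP => /eqP e.
  move/negP: p12; apply; rewrite setD_eq0; apply: subset_trans C1X _.
  by rewrite -e subsetIl.
have [Y [/andP [/andP [tY YX] YltX] Ymax]] := ex_maxcard (P := fun U => tight U && (U \subset X) && (#|U| < #|X|)) PZ1.
exists X, Y, C1; split => //; first by rewrite C1F C1X.
move=> C CF CX.
have [_ [U /andP [tU /andP [pU1 pU2]]]] := eF C CF.
apply/andP; split; last first.
  rewrite setD_eq0; apply/negP => CY.
  have : #|X| <= #|Y| by apply: Xmin; rewrite tY; apply/hasP; exists C.
  by rewrite leqNgt YltX.
apply/negP => /eqP YC0.
set Z := U :&: X.
have tYZ : tight (Y :|: Z) by apply: (tightU kac tY (tightI kac tU tX)).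
have YZX : Y :|: Z \subset X by rewrite subUset YX subsetIr.
case: (eqVneq (Y :|: Z) X) => [e|ne].
  move/negP: pU2; apply; rewrite setD_eq0; apply/subsetP => x xC.
  have : x \in Y :|: Z by rewrite e (subsetP CX).
  rewrite in_setU => /orP [xY|]; last by rewrite in_setI => /andP [].
  have : x \in Y :&: cv C by rewrite in_setI xY.
  by rewrite YC0 in_set0.
have lt : #|Y :|: Z| < #|X| by apply: proper_card; rewrite properEneq ne YZX.
have le : #|Y :|: Z| <= #|Y| by apply: Ymax; rewrite tYZ YZX lt.
have eY : Y :|: Z = Y by apply/eqP; rewrite eq_sym eqEcard subsetUl le.
move/set0Pn: pU1 => [x]; rewrite in_setI => /andP [xU xC].
have : x \in Y :&: cv C.
  by rewrite in_setI xC andbT -eY in_setU in_setI xU (subsetP CX) ?orbT.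
by rewrite YC0 in_set0.
Qed.

End Proof5.
Lemma cntU (T : Type) (a b : pred T) (l : seq T) :
  count (predU a b) l <= count a l + count b l.
Proof. by rewrite -count_predUI leq_addr. Qed.

Section Proof6.
Variables (V A : finType) (tl hd : A -> V) (r s : V) (k : nat).
Hypothesis kac : steiner_rooted_kac tl hd r [set s] k.

Local Notation tight := (tight_s_cut tl hd k r s).
Local Notation cv := (cyc_verts tl).
Local Notation ess := (s_essential tl hd k r s).

Lemma chain q : forall F, uniq F -> pdisj tl F -> (forall C, C \in F -> ess C) ->
  q * (2 * k + 1) <= size F ->
  exists (Cs : nat -> seq A) (Us : nat -> {set V}),
  [/\ forall i, i < q -> (Cs i \in F) && tight (Us i),
      forall i j, i < j < q -> cv (Cs i) \subset Us j,
      forall i j, j < i < q -> cv (Cs i) :&: Us j = set0 &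
      forall i, i < q -> properly_intersects tl (Us i) (Cs i)].
Proof.
elim: q => [|q IH] F uF dF eF szF.
  by exists (fun _ => [::]), (fun _ => set0); split=> [i //|i j /andP [_ //]|i j /andP [_ //]|i //].
have szk : k < size F by nia.
have [X [Y [C1 [tX tY /andP [C1F C1X] YX Ysplit]]]] :=
  step2 kac eF (step1 kac dF uF eF szk).
pose p1 := fun C : seq A => cv C \subset X.
pose p2 := fun C : seq A => properly_intersects tl X C.
pose p3 := fun C : seq A => [disjoint cv C & X].
have cover C : p1 C || p2 C || p3 C.
  rewrite /p1 /p2 /p3 /properly_intersects setD_eq0.
  case: (cv C \subset X) => //=; rewrite andbT setI_eq0 disjoint_sym.
  by case: [disjoint _ & _].
have c1 : count p1 F <= k.
  rewrite -size_filter; apply: (split_bound tY (filter_uniq _ uF) (pdisj_filter (p := p1) dF)) => C.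
  rewrite mem_filter => /andP [pC CF]; have [dC _] := eF C CF.
  by rewrite dC Ysplit.
have c2 : count p2 F <= k.
  rewrite -size_filter; apply: (split_bound tX (filter_uniq _ uF) (pdisj_filter (p := p2) dF)) => C.
  rewrite mem_filter => /andP [pC CF]; have [dC _] := eF C CF.
  by rewrite dC; exact: pC.
have c3 : size F <= count p1 F + count p2 F + count p3 F.
  rewrite -count_predT.
  apply: (leq_trans (sub_count (a2 := predU p1 (predU p2 p3)) _ F)).
    by move=> C _ /=; rewrite orbA cover.
  apply: (leq_trans (cntU _ _ _)); rewrite -addnA leq_add2l; exact: cntU.
set F3 := filter p3 F.
have sz3 : q * (2 * k + 1) <= size F3 by rewrite size_filter; nia.
have eF3 : forall C, C \in F3 -> ess C.
  by move=> C; rewrite mem_filter => /andP [_ CF]; apply: eF.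
have [Cs [Us [H1 H2 H3 H4]]] :=
  IH F3 (filter_uniq _ uF) (pdisj_filter (p := p3) dF) eF3 sz3.
have dX i : i < q -> [disjoint cv (Cs i) & X].
  by move=> lt; have /andP [] := H1 i lt; rewrite mem_filter => /andP [].
exists (fun i => if i is i'.+1 then Cs i' else C1),
       (fun i => if i is i'.+1 then Us i' :|: X else Y).
split.
- case=> [|i] /= lt; first by rewrite C1F tY.
  have /andP [CF3 tU] := H1 i lt; rewrite (tightU kac tU tX) andbT.
  by move: CF3; rewrite mem_filter => /andP [_ ->].
- case=> [|i] [|j] //=; [move=> _ | move=> /andP [lij ljq]].
  + by rewrite (subset_trans C1X) // subsetUr.
  + by rewrite (subset_trans (H2 i j _)) ?subsetUl // -ltnS lij -ltnS ljq.
- case=> [|i] [|j] //=; [move=> liq | move=> /andP [lji liq]].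
  + by apply/eqP; rewrite setI_eq0; exact: (disjointWr YX (dX i liq)).
  + rewrite setIUr (H3 i j _) ?set0U; last by rewrite -ltnS lji -ltnS liq.
    by apply/eqP; rewrite setI_eq0 dX.
- case=> [|i] /= lt; first by apply: Ysplit.
  have p := H4 i lt.
  have eX : X :&: cv (Cs i) = set0 by apply/eqP; rewrite setI_eq0 disjoint_sym dX.
  rewrite /properly_intersects setIUl eX setU0 setDUr (setDidPl (dX i lt)).
  by rewrite (setIidPl (subsetDl _ _)).
Qed.

End Proof6.
Theorem proposition2p3 :
  forall q k : nat, 0 < q -> 0 < k ->
  exists f : nat,
  forall (V A : finType) (tl hd : A -> V) (r s : V),
    steiner_rooted_kac tl hd r [set s] k ->
    forall F : seq (seq A),
      (forall C, C \in F -> s_essential tl hd k r s C) ->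
      (forall i j, i < j < size F ->
         [disjoint cyc_verts tl (nth [::] F i) & cyc_verts tl (nth [::] F j)]) ->
      f <= size F ->
      exists Cs : 'I_q -> seq A,
        (forall i, Cs i \in F) /\ s_ordered tl hd k r s Cs.
Proof.
move=> q k _ _; exists (q * (2 * k + 1)) => V A tl hd r s kac F eF dF sz.
have dF' : pdisj tl F.
  move=> C C' CF C'F ne.
  rewrite -(nth_index [::] CF) -(nth_index [::] C'F).
  have iF := CF; have jF := C'F; rewrite -index_mem in iF; rewrite -index_mem in jF.
  case: (ltngtP (index C F) (index C' F)) => [lt|lt|e].
  - by apply: dF; rewrite lt jF.
  - by rewrite disjoint_sym; apply: dF; rewrite lt iF.
  - by move: ne; rewrite -(nth_index [::] CF) -(nth_index [::] C'F) e eqxx.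
have uF : uniq F.
  apply/negPn/negP => /(uniqPn [::]) [i [j [lij ljF e]]].
  have iF : i < size F by apply: ltn_trans lij ljF.
  have := dF i j; rewrite lij ljF e => /(_ isT) /disjoint_setI0; rewrite setIid.
  have [dC _] := eF _ (mem_nth [::] ljF).
  case: (nth [::] F j) dC => [//|a C] _ /setP /(_ (tl a)).
  by rewrite /cyc_verts in_set in_set0 /= in_cons eqxx.
have [Cs [Us [H1 H2 H3 H4]]] := chain kac uF dF' eF sz.
exists (fun i : 'I_q => Cs i); split.
  by move=> i; have /andP [] := H1 i (ltn_ord i).
split.
  by move=> i; have /andP [CF _] := H1 i (ltn_ord i); have [] := eF _ CF.
exists (fun i : 'I_q => Us i); split.
  by move=> i; have /andP [_ ->] := H1 i (ltn_ord i).
split.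
  by move=> i j lij; apply: H2; rewrite lij ltn_ord.
split.
  by move=> i j lji; apply: H3; rewrite lji ltn_ord.
by move=> i; apply: H4.
Qed.
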